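(* Under the hypotheses (torsion-free $G$; $l:G\to\mathbb{Z}^n$ a $\delta$-regular $\delta$-hyperbolic length function with (A) $ht(\delta)=1$, (B) $l(g^m)<l(g)$ for some nonzero integer $m$ implies $ht(l(g)-l(g^m))=1$, (C) $l(g)>0$ for $g\ne 1$), for every $k$ with $1\le k<n$ there is a simplicial tree $\Gamma$ whose vertex set is the set $G_{k+1}/G_k$ of left cosets of $G_k$ in $G_{k+1}$, on which $G_{k+1}$ acts by isometries without inversions, the action on vertices being left multiplication of cosets.
   Context: $\mathbb{Z}^n$ carries the right lexicographic order ($a<b$ iff $a_j<b_j$ for the largest $j$ with $a_j\ne b_j$); $ht(a)$ is the largest index $k$ with $a_k\ne0$, $ht(0)=0$. A length function satisfies $l(1)=0$, $l(g)\ge0$, $l(g^{-1})=l(g)$, $l(gh)\le l(g)+l(h)$; $c(g,h)=\tfrac12(l(g)+l(h)-l(g^{-1}h))$; $\delta$-hyperbolic: $c(f,g)\ge\min\{c(f,h),c(g,h)\}-\delta$ for all $f,g,h$; $\delta$-regular: for all $g,h$ there are $g_c,h_c,g_d,h_d$ with $l(g_c)=l(h_c)=c(g,h)$, $g=g_ch_c^{}$… precisely $g=g_cg_d$, $h=h_ch_d$ with $l(g)=l(g_c)+l(g_d)$, $l(h)=l(h_c)+l(h_d)$, and $l(g_c^{-1}h_c)\le4\delta$. $G_k=\{g\in G\mid ht(l(g))\le k\}$ (a subgroup of $G$). *)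

(* Defs.v *)
(* Z^n is modelled as 'rV[int]_n; paper index j (1..n)
   corresponds to the ordinal j-1 : 'I_n. *)
From HB Require Import structures.
From mathcomp Require Import all_boot all_order all_algebra.
Set Implicit Arguments. Unset Strict Implicit. Unset Printing Implicit Defensive.
Import Order.TTheory GRing.Theory Num.Theory.
Local Open Scope ring_scope.

Definition lexlt (n : nat) (a b : 'rV[int]_n) : bool :=
  [exists j : 'I_n, (a 0 j < b 0 j) &&
     [forall i : 'I_n, (j < i)%N ==> (a 0 i == b 0 i)]].

Definition lexle (n : nat) (a b : 'rV[int]_n) : bool := (a == b) || lexlt a b.

Definition lexmin (n : nat) (a b : 'rV[int]_n) : 'rV[int]_n :=
  if lexle a b then a else b.

Definition ht (n : nat) (a : 'rV[int]_n) : nat :=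
  \max_(i : 'I_n | a 0 i != 0) i.+1.

Record is_group (T : Type) (mul : T -> T -> T) (inv : T -> T) (e : T) : Prop := {
  grp_assoc : forall x y z, mul x (mul y z) = mul (mul x y) z;
  grp_id_l : forall x, mul e x = x;
  grp_inv_l : forall x, mul (inv x) x = e }.

Definition gpow (T : Type) (mul : T -> T -> T) (inv : T -> T) (e : T)
  (g : T) (m : int) : T :=
  match m with
  | Posz k => iter k (mul g) e
  | Negz k => iter k.+1 (mul (inv g)) e
  end.

Definition torsion_free (T : Type) (mul : T -> T -> T) (e : T) : Prop :=
  forall (g : T) (m : nat), (0 < m)%N -> iter m (mul g) e = e -> g = e.

Definition is_length_function (T : Type) (mul : T -> T -> T) (inv : T -> T)
  (e : T) (n : nat) (l : T -> 'rV[int]_n) : Prop :=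
  [/\ l e = 0,
      forall g, lexle 0 (l g),
      forall g, l (inv g) = l g &
      forall g h, lexle (l (mul g h)) (l g + l h)].

(* dbl_c g h = 2 c(g,h) = l(g) + l(h) - l(g^{-1} h) *)
Definition dbl_c (T : Type) (mul : T -> T -> T) (inv : T -> T) (n : nat)
  (l : T -> 'rV[int]_n) (g h : T) : 'rV[int]_n :=
  l g + l h - l (mul (inv g) h).

(* c(f,g) >= min{c(f,h), c(g,h)} - delta, multiplied through by 2 *)
Definition hyperbolic (T : Type) (mul : T -> T -> T) (inv : T -> T) (n : nat)
  (l : T -> 'rV[int]_n) (delta : 'rV[int]_n) : Prop :=
  forall f g h,
    lexle (lexmin (dbl_c mul inv l f h) (dbl_c mul inv l g h) - delta *+ 2)
          (dbl_c mul inv l f g).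

Definition regular (T : Type) (mul : T -> T -> T) (inv : T -> T) (n : nat)
  (l : T -> 'rV[int]_n) (delta : 'rV[int]_n) : Prop :=
  forall g h, exists gc hc gd hd,
    l gc *+ 2 = dbl_c mul inv l g h /\
    l hc *+ 2 = dbl_c mul inv l g h /\
    g = mul gc gd /\ h = mul hc hd /\
    l g = l gc + l gd /\ l h = l hc + l hd /\
    lexle (l (mul (inv gc) hc)) (delta *+ 4).

Definition Gk (T : Type) (n : nat) (l : T -> 'rV[int]_n) (k : nat) (g : T) : Prop :=
  (ht (l g) <= k)%N.

(* ---------- simplicial G_{k+1}-tree on the left cosets G_{k+1}/G_k ----------
   A vertex is a left coset x G_k with x in G_{k+1}; it is represented by x,
   and x, y represent the same vertex iff x^{-1} y \in G_k. *)

Definition same_coset (T : Type) (mul : T -> T -> T) (inv : T -> T) (n : nat)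
  (l : T -> 'rV[int]_n) (k : nat) (x y : T) : Prop :=
  Gk l k (mul (inv x) y).

Definition is_walk (T : Type) (e : T) (E : T -> T -> Prop) (s : seq T) : Prop :=
  forall i, (i.+1 < size s)%N -> E (nth e s i) (nth e s i.+1).

Definition coset_tree_action (T : Type) (mul : T -> T -> T) (inv : T -> T) (e : T)
  (n : nat) (l : T -> 'rV[int]_n) (k : nat) (E : T -> T -> Prop) : Prop :=
  let V := Gk l k.+1 in
  let eqv := same_coset mul inv l k in
  (
      forall x y, E x y -> V x /\ V y) /\
      (* E is a relation on cosets: independent of representatives *)
      (forall x x' y y', V x -> V y -> eqv x x' -> eqv y y' -> E x y -> E x' y') /\
      (forall x y, E x y -> E y x) /\
      (forall x y, V x -> V y -> exists s : seq T,
          [/\ is_walk e E s, (0 < size s)%N, eqv (nth e s 0) x &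
              eqv (last e s) y]) /\
      (* no loops and no cycles: every closed walk of positive length
         backtracks somewhere *)
      (forall s : seq T, is_walk e E s -> (1 < size s)%N ->
          eqv (nth e s 0) (last e s) ->
          exists i, [/\ (0 < i)%N, (i.+1 < size s)%N &
                       eqv (nth e s i.-1) (nth e s i.+1)]) /\
      (* G_{k+1} acts by left multiplication of cosets, preserving edges
         (hence by graph automorphisms, i.e. isometries) *)
      (forall g x y, V g -> E x y -> E (mul g x) (mul g y)) /\
      (forall g x y, V g -> E x y -> eqv (mul g x) y -> eqv (mul g y) x -> False).

(* Main.v *)
Require Import Defs.
From HB Require Import structures.
From mathcomp Require Import all_boot all_order all_algebra.
From mathcomp Require Import zify.
From Stdlib Require Import Classical.
Import Order.TTheory GRing.Theory Num.Theory.
Set Implicit Arguments. Unset Strict Implicit.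
Local Open Scope ring_scope.

Lemma grp_mulV (T : Type) (mul : T -> T -> T) (inv : T -> T) (e : T) :
  is_group mul inv e -> forall x, mul x (inv x) = e.
Proof.
case=> A I L x.
have H : mul (inv (inv x)) (mul (inv x) (mul x (inv x))) = mul x (inv x).
  by rewrite (A (inv (inv x))) (L (inv x)) I.
by rewrite -H (A (inv x) x (inv x)) (L x) (I (inv x)) (L (inv x)).
Qed.

Lemma grp_mul1 (T : Type) (mul : T -> T -> T) (inv : T -> T) (e : T) :
  is_group mul inv e -> forall x, mul x e = x.
Proof.
move=> HG x; have [A I L] := HG.
by rewrite -(L x) (A x (inv x) x) (grp_mulV HG x) (I x).
Qed.

Lemma grp_invK (T : Type) (mul : T -> T -> T) (inv : T -> T) (e : T) :
  is_group mul inv e -> forall x, inv (inv x) = x.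
Proof.
move=> HG x; have [A I L] := HG.
by rewrite -{1}(grp_mul1 HG (inv (inv x))) -(L x) (A _ _ _) (L (inv x)) (I x).
Qed.

Lemma grp_invM (T : Type) (mul : T -> T -> T) (inv : T -> T) (e : T) :
  is_group mul inv e -> forall x y, inv (mul x y) = mul (inv y) (inv x).
Proof.
move=> HG x y; have [A I L] := HG.
have H : mul (mul x y) (mul (inv y) (inv x)) = e.
  by rewrite -(A x y _) (A y (inv y) (inv x)) (grp_mulV HG y) (I (inv x)) (grp_mulV HG x).
by rewrite -{1}(grp_mul1 HG (inv (mul x y))) -H (A _ _ _) (L (mul x y)) I.
Qed.

Lemma grp_inv1 (T : Type) (mul : T -> T -> T) (inv : T -> T) (e : T) :
  is_group mul inv e -> inv e = e.
Proof. move=> HG; have [A I L] := HG; by rewrite -{1}(grp_mul1 HG (inv e)) (L e). Qed.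

Definition vanish (n : nat) (K : 'I_n) (a : 'rV[int]_n) :=
  forall i : 'I_n, (K < i)%N -> a 0 i = 0.

Lemma ht_leP (n : nat) (a : 'rV[int]_n) (m : nat) :
  (ht a <= m)%N <-> (forall i : 'I_n, (m <= i)%N -> a 0 i = 0).
Proof.
split.
  move=> /bigmax_leqP H i hi; case: (a 0 i =P 0) => // /eqP /H; lia.
move=> H; apply/bigmax_leqP => i hi.
case: (leqP m i) => // /H hz; by rewrite hz eqxx in hi.
Qed.

Lemma lex_L1 (n : nat) (K : 'I_n) (a b : 'rV[int]_n) :
  vanish K a -> vanish K b -> lexle a b -> a 0 K <= b 0 K.
Proof.
move=> va vb; case/orP => [/eqP -> // | /existsP [j /andP [ltj /forallP H]]].
case: (ltngtP j K) => hjK.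
- by move/implyP: (H K) => /(_ hjK) /eqP ->.
- by rewrite (va _ hjK) (vb _ hjK) ltxx in ltj.
- have -> : K = j by apply: val_inj; rewrite /= hjK.
  exact: ltW.
Qed.

Lemma lexle0P (n : nat) (a : 'rV[int]_n) : lexle 0 a ->
  a = 0 \/ exists j : 'I_n, 0 < a 0 j /\ forall i : 'I_n, (j < i)%N -> a 0 i = 0.
Proof.
case/orP => [/eqP <-|/existsP [j /andP [ltj /forallP H]]]; [by left|right].
exists j; split; first by move: ltj; rewrite mxE.
move=> i hi; move/implyP: (H i) => /(_ hi) /eqP <-; by rewrite mxE.
Qed.

Lemma lex_L2 (n : nat) (K : 'I_n) (a b : 'rV[int]_n) :
  lexle 0 a -> lexle 0 b -> vanish K (a + b) -> vanish K a.
Proof.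
move=> /lexle0P ha /lexle0P hb vab i hi.
case: ha => [-> | [ja [pa za]]]; first by rewrite mxE.
case: (leqP i ja) => hij; last by apply: za.
exfalso.
case: hb => [hb0 | [jb [pb zb]]].
  have := vab ja (leq_trans hi hij); rewrite hb0 !mxE addr0 => h; by rewrite h ltxx in pa.
case: (leqP jb ja) => hj.
  have := vab ja (leq_trans hi hij); rewrite !mxE => h.
  have : 0 <= b 0 ja.
    case: (ltngtP jb ja) hj => // [h1 _|h1 _]; first by rewrite zb.
    have -> : ja = jb by apply: val_inj; rewrite /= h1.
    exact: ltW.
  move=> hb; have : 0 < a 0 ja + b 0 ja by apply: ltr_wpDr.
  by rewrite h ltxx.
have := vab jb (leq_trans (leq_trans hi hij) (ltnW hj)); rewrite !mxE (za _ hj) add0r => h.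
by rewrite h ltxx in pb.
Qed.

Lemma lex_L3 (n : nat) (K : 'I_n) (a b : 'rV[int]_n) :
  lexle 0 a -> lexle a b -> vanish K b -> vanish K a.
Proof.
move=> /lexle0P ha hab vb i hi.
case: ha => [-> | [ja [pa za]]]; first by rewrite mxE.
case: (leqP i ja) => hij; last by apply: za.
exfalso.
have hK : (K < ja)%N by apply: leq_trans hi hij.
case/orP: hab => [/eqP hab | /existsP [j /andP [ltj /forallP H]]].
  by move: pa; rewrite hab (vb _ hK) ltxx.
case: (ltngtP j ja) => hj.
- move/implyP: (H ja) => /(_ hj) /eqP; rewrite (vb _ hK) => h; by rewrite h ltxx in pa.
- by move: ltj; rewrite (za _ hj) (vb _ (ltn_trans hK hj)) ltxx.
- have ej : j = ja by apply: val_inj.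
  move: ltj; rewrite ej (vb _ hK) => h.
  by have := lt_trans h pa; rewrite ltxx.
Qed.

Lemma grp_G3 (T : Type) (mul : T -> T -> T) (inv : T -> T) (e : T) :
  is_group mul inv e -> forall g z, mul (inv g) (mul g z) = z.
Proof. move=> HG g z; have [A I L] := HG; by rewrite A L I. Qed.

Lemma grp_G2 (T : Type) (mul : T -> T -> T) (inv : T -> T) (e : T) :
  is_group mul inv e -> forall g z, mul g (mul (inv g) z) = z.
Proof.
move=> HG g z; have [A I L] := HG.
by rewrite -{1}(grp_invK HG g) (grp_G3 HG).
Qed.

Lemma grp_G1 (T : Type) (mul : T -> T -> T) (inv : T -> T) (e : T) :
  is_group mul inv e -> forall g x y, mul (inv (mul g x)) (mul g y) = mul (inv x) y.
Proof.
move=> HG g x y; have [A I L] := HG.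
by rewrite (grp_invM HG) -A (grp_G3 HG).
Qed.

Lemma grp_G4 (T : Type) (mul : T -> T -> T) (inv : T -> T) (e : T) :
  is_group mul inv e -> forall x y z, mul (mul (inv x) y) (mul (inv y) z) = mul (inv x) z.
Proof.
move=> HG x y z; have [A I L] := HG.
by rewrite -A (grp_G2 HG).
Qed.

Lemma lex_hyp (n : nat) (K : 'I_n) (u v x d : 'rV[int]_n) :
  vanish K u -> vanish K v -> vanish K x -> vanish K d -> d 0 K = 0 ->
  lexle (lexmin u v - d) x -> u 0 K <= x 0 K \/ v 0 K <= x 0 K.
Proof.
move=> vu vv vx vd dK; rewrite /lexmin; case: ifP => _ H; [left|right];
  (have := lex_L1 _ vx H; rewrite !mxE dK subr0; apply);
  move=> i hi; by rewrite !mxE ?vu ?vv ?vd // subr0.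
Qed.

Lemma walk_cons (T : Type) (e : T) (E : T -> T -> Prop) x y s :
  is_walk e E (x :: y :: s) <-> E x y /\ is_walk e E (y :: s).
Proof.
split.
  by move=> H; split; [exact: (H 0%N) | move=> i hi; exact: (H i.+1)].
by case=> h1 h2 [|i] hi; [exact: h1 | exact: h2].
Qed.

Lemma walk_cat (T : Type) (e : T) (E : T -> T -> Prop) s1 : forall x t,
  is_walk e E (x :: s1) -> is_walk e E (last x s1 :: t) -> is_walk e E (x :: s1 ++ t).
Proof.
elim: s1 => [//|y s1 IH] x t /walk_cons [h1 h2] h3 /=.
by apply/walk_cons; split => //; apply: IH.
Qed.

Theorem lemma3p4 (T : Type) (mul : T -> T -> T) (inv : T -> T) (e : T)
  (n : nat) (l : T -> 'rV[int]_n) (delta : 'rV[int]_n) :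
  is_group mul inv e ->
  torsion_free mul e ->
  is_length_function mul inv e l ->
  hyperbolic mul inv l delta ->
  regular mul inv l delta ->
  ht delta = 1%N ->                                                  (* (A) *)
  (forall (g : T) (m : int), m != 0 ->
     lexlt (l (gpow mul inv e g m)) (l g) ->
     ht (l g - l (gpow mul inv e g m)) = 1%N) ->                     (* (B) *)
  (forall g : T, g <> e -> lexlt 0 (l g)) ->                         (* (C) *)
  forall k : nat, (1 <= k)%N -> (k < n)%N ->
    exists E : T -> T -> Prop, coset_tree_action mul inv e l k E.
Proof.
move=> HG _ Hl Hhyp Hreg Hd HB _ k hk1 hkn.
have [A I Linv] := HG.
have [Hl0 Hlpos Hlinv Hlsub] := Hl.
pose K : 'I_n := Ordinal hkn.
pose V := Gk l k.+1.
pose D := fun x y : T => (l (mul (inv x) y) 0 K : int).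
have VP : forall g, V g <-> vanish K (l g).
  move=> g; rewrite /V /Gk ht_leP; split => H i hi; apply: H => //.
have dvan : forall i : 'I_n, (1 <= i)%N -> delta 0 i = 0 by apply/ht_leP; rewrite Hd.
have dK : delta 0 K = 0 by apply: dvan.
have dV : forall m, vanish K (delta *+ m).
  move=> m i hi; rewrite mulmxnE dvan ?mul0rn //; exact: leq_trans hk1 (ltnW hi).
have Ve : V e by apply/VP => i _; rewrite Hl0 mxE.
have Vmul : forall g h, V g -> V h -> V (mul g h).
  move=> g h /VP vg /VP vh; apply/VP; apply: (lex_L3 (Hlpos _) (Hlsub g h)).
  by move=> i hi; rewrite mxE vg // vh // addr0.
have Vinv : forall g, V g -> V (inv g) by move=> g; rewrite /V /Gk Hlinv.
have Dxx : forall x, D x x = 0 by move=> x; rewrite /D Linv Hl0 mxE.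
have Dge0 : forall x y, V x -> V y -> 0 <= D x y.
  move=> x y vx vy; have := lex_L1 (K := K) (a := 0) _ _ (Hlpos (mul (inv x) y)).
  rewrite mxE; apply; first by move=> i _; rewrite mxE.
  by apply/VP; apply: Vmul => //; apply: Vinv.
have Dsym : forall x y, D x y = D y x.
  by move=> x y; rewrite /D -Hlinv (grp_invM HG) (grp_invK HG).
have Dtri : forall x y z, V x -> V y -> V z -> D x z <= D x y + D y z.
  move=> x y z vx vy vz.
  have := lex_L1 (K := K) _ _ (Hlsub (mul (inv x) y) (mul (inv y) z)).
  rewrite (grp_G4 HG) mxE; apply.
    by apply/VP; apply: Vmul => //; apply: Vinv.
  have /VP v1 : V (mul (inv x) y) by apply: Vmul => //; apply: Vinv.
  have /VP v2 : V (mul (inv y) z) by apply: Vmul => //; apply: Vinv.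
  by move=> i hi; rewrite mxE v1 // v2 // addr0.
have Dinv : forall g x y, D (mul g x) (mul g y) = D x y.
  by move=> g x y; rewrite /D (grp_G1 HG).
have eqvD : forall x y, V x -> V y -> (same_coset mul inv l k x y <-> D x y = 0).
  move=> x y vx vy; have /VP vxy : V (mul (inv x) y) by apply: Vmul => //; apply: Vinv.
  rewrite /same_coset /Gk ht_leP; split.
    by move=> H; apply: H.
  move=> H0 i hi; case: (ltngtP k i) hi => // hki _.
    exact: vxy.
  by have -> : i = K by apply: val_inj; rewrite /= hki.
have GkV : forall g, Gk l k g -> V g by move=> g; rewrite /V /Gk => h; apply: leq_trans h _.
have Dcong : forall x x' w, V x -> V x' -> V w -> D x x' = 0 -> D x' w = D x w.
  move=> x x' w vx vx' vw h0; apply/eqP; rewrite eq_le; apply/andP; split.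
    have := Dtri x' x w vx' vx vw; by rewrite (Dsym x' x) h0 add0r.
  have := Dtri x x' w vx vx' vw; by rewrite h0 add0r.
have HypD : forall b x y w, V b -> V x -> V y -> V w ->
   D b x + D b w - D x w <= D b x + D b y - D x y \/
   D b y + D b w - D y w <= D b x + D b y - D x y.
  move=> b x y w vb vx vy vw.
  have := Hhyp (mul (inv b) x) (mul (inv b) y) (mul (inv b) w).
  have vbx : forall u, V u -> vanish K (l (mul (inv b) u)).
    by move=> u vu; apply/VP; apply: Vmul => //; apply: Vinv.
  have vuv : forall u v, V u -> V v -> vanish K (l (mul (inv u) v)).
    by move=> u v vu vv; apply/VP; apply: Vmul => //; apply: Vinv.
  have vdc : forall u v, V u -> V v ->
      vanish K (dbl_c mul inv l (mul (inv b) u) (mul (inv b) v)).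
    move=> u v vu vv i hi; rewrite /dbl_c (grp_G1 HG) !mxE (vbx u vu) // (vbx v vv) //.
    by rewrite (vuv u v vu vv) // !add0r oppr0.
  move/(lex_hyp (vdc _ _ vx vw) (vdc _ _ vy vw) (vdc _ _ vx vy) (dV 2%N)).
  rewrite mulmxnE dK mul0rn => /(_ erefl).
  by rewrite /dbl_c !(grp_G1 HG) !mxE.
have RegD : forall b x y, V b -> V x -> V y -> exists z z', [/\ V z, V z',
    D b z + D b z = D b x + D b y - D x y, D b z' = D b z &
    [/\ D b z + D z x = D b x, D b z' + D z' y = D b y & D z z' = 0]].
  move=> b x y vb vx vy.
  have [gc [hc [gd [hd [H1 [H2 [Hg [Hh [Hlg [Hlh H4]]]]]]]]]] :=
    Hreg (mul (inv b) x) (mul (inv b) y).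
  have vg : V (mul (inv b) x) by apply: Vmul => //; apply: Vinv.
  have vh : V (mul (inv b) y) by apply: Vmul => //; apply: Vinv.
  have vgc : V gc by apply/VP; apply: (lex_L2 (Hlpos _) (Hlpos gd)); rewrite -Hlg; apply/VP.
  have vgd : V gd.
    by apply/VP; apply: (lex_L2 (Hlpos _) (Hlpos gc)); rewrite addrC -Hlg; apply/VP.
  have vhc : V hc by apply/VP; apply: (lex_L2 (Hlpos _) (Hlpos hd)); rewrite -Hlh; apply/VP.
  have vhd : V hd.
    by apply/VP; apply: (lex_L2 (Hlpos _) (Hlpos hc)); rewrite addrC -Hlh; apply/VP.
  have e1 : forall u, mul (inv b) (mul b u) = u by move=> u; apply: (grp_G3 HG).
  exists (mul b gc), (mul b hc); split; [| | | |split].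
  - exact: Vmul.
  - exact: Vmul.
  - have := congr1 (fun M : 'M[int]_(1,n) => M 0 K) H1; rewrite /= /dbl_c (grp_G1 HG) !mxE /D e1 => h; exact: h.
  - have := congr1 (fun M : 'M[int]_(1,n) => M 0 K) H1; have := congr1 (fun M : 'M[int]_(1,n) => M 0 K) H2.
    rewrite /= /D !e1 !mxE => <- h.
    have hh : forall u v : int, u + u = v + v -> u = v by move=> u v; lia.
    exact: hh (esym h).
  - have := congr1 (fun M : 'M[int]_(1,n) => M 0 K) Hlg; rewrite /= mxE /D e1 => ->.
    by rewrite (grp_invM HG) -A Hg (grp_G3 HG).
  - have := congr1 (fun M : 'M[int]_(1,n) => M 0 K) Hlh; rewrite /= mxE /D e1 => ->.
    by rewrite (grp_invM HG) -A Hh (grp_G3 HG).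
  - apply/eqP; rewrite eq_le; apply/andP; split; last by apply: Dge0; apply: Vmul.
    rewrite /D (grp_G1 HG); have := lex_L1 (K := K) _ (dV 4%N) H4.
    rewrite mulmxnE dK mul0rn; apply.
    by apply/VP; apply: Vmul => //; apply: Vinv.
pose E := fun x y => [/\ V x, V y, 0 < D x y &
   forall z, V z -> D x z + D z y = D x y -> D x z = 0 \/ D z y = 0].
(* one step of a non-backtracking walk *)
have step : forall a b c, E a b -> E b c -> 0 < D a c -> D a c = D a b + D b c.
  move=> a b c [va vb pab Hab] [_ vc pbc Hbc] pac.
  have [z [z' [vz vz' h1 h2 [h3 h4 h5]]]] := RegD b a c vb va vc.
  have Hba : forall w, V w -> D b w + D w a = D b a -> D b w = 0 \/ D w a = 0.
    move=> w vw h; have := Hab w vw; rewrite (Dsym a w) (Dsym w b) (Dsym a b) addrC.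
    move/(_ h); tauto.
  case: (Hba z vz); first by rewrite h3 Dsym.
    move=> hz; rewrite hz add0r in h1; rewrite (Dsym a b); lia.
  move=> hza; case: (Hbc z' vz' h4) => [hz'|hz'c].
    move: hz'; rewrite h2 => hz; rewrite hz add0r in h1; rewrite (Dsym a b); lia.
  have := Dtri a z c va vz vc; have := Dtri z z' c vz vz' vc.
  rewrite h5 hz'c (Dsym a z) hza; lia.
have extend : forall v a b c, V v -> E a b -> E b c ->
    D v b = D v a + D a b -> D a c = D a b + D b c -> D v c = D v b + D b c.
  move=> v a b c vv [va vb pab _] [_ vc _ _] h1 h2.
  have := HypD b a c v vb va vc vv; rewrite h2 (Dsym b a) (Dsym a v) (Dsym b v) h1.
  have := Dtri v b c vv vb vc; rewrite (Dsym b c) (Dsym v c).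
  have := Dge0 a v va vv; have := Dge0 a b va vb; lia.
exists E; split; [|split; [|split; [|split; [|split; [|split]]]]].
- by move=> x y [].
- move=> x x' y y' vx vy hx hy.
  have vx' : V x'.
    have <- : mul x (mul (inv x) x') = x' by apply: (grp_G2 HG).
    apply: Vmul => //; apply: GkV; exact: hx.
  have vy' : V y'.
    have <- : mul y (mul (inv y) y') = y' by apply: (grp_G2 HG).
    apply: Vmul => //; apply: GkV; exact: hy.
  move: hx hy => /(eqvD _ _ vx vx') hx /(eqvD _ _ vy vy') hy [_ _ p H]; split => //.
  + by rewrite (Dcong x x') // (Dsym x y') (Dcong y y') // Dsym.
  + move=> z vz; rewrite (Dcong x x' z) // (Dcong x x' y') // (Dsym z y') (Dcong y y' z) //.
    rewrite (Dsym x y') (Dcong y y' x) // (Dsym y z) (Dsym y x); exact: H.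
- move=> x y [vx vy p H]; split => //; first by rewrite Dsym.
  move=> z vz; rewrite (Dsym y z) (Dsym z x) (Dsym y x) addrC => /(H z vz); tauto.
- have conn : forall m : nat, forall x y, V x -> V y -> 0 < D x y -> D x y <= m%:Z ->
      exists t, is_walk e E (x :: t) /\ last x t = y.
    elim=> [|m IH] x y vx vy p hm; first by exfalso; lia.
    case: (classic (E x y)) => hE.
      by exists [:: y]; split => //; apply/walk_cons; split => // i /=.
    have [z [vz [hs [h1 h2]]]] : exists z, V z /\ (D x z + D z y = D x y /\
        (D x z <> 0 /\ D z y <> 0)).
      apply: NNPP => hno; apply: hE; split => // z vz hs.
      case: (D x z =P 0) => [|h1]; [by left|]; case: (D z y =P 0) => [|h2]; [by right|].
      exfalso; apply: hno; exists z; tauto.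
    have := Dge0 x z vx vz; have := Dge0 z y vz vy => g1 g2.
    have [t1 [w1 l1]] := IH x z vx vz ltac:(lia) ltac:(lia).
    have [t2 [w2 l2]] := IH z y vz vy ltac:(lia) ltac:(lia).
    exists (t1 ++ t2); split; first by apply: walk_cat => //; rewrite l1.
    by rewrite last_cat l1.
  move=> x y vx vy; case: (D x y =P 0) => h0.
    exists [:: x]; split => //=; apply/eqvD => //.
  have := Dge0 x y vx vy => g.
  have [t [w lt]] := conn `|D x y|%N x y vx vy ltac:(lia) ltac:(lia).
  exists (x :: t); split => //=; rewrite ?lt; apply/eqvD => //.
- move=> s hw hs heq; apply: NNPP => hno.
  have Vs : forall i, (i < size s)%N -> V (nth e s i).
    case=> [|i] hi; first by have [] := hw 0%N hs.
    by have [] := hw i hi.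
  have nb : forall i, (i.+2 < size s)%N -> 0 < D (nth e s i) (nth e s i.+2).
    move=> i hi; have := Dge0 _ _ (Vs i (ltnW (ltnW hi))) (Vs i.+2 hi).
    case: (D (nth e s i) (nth e s i.+2) =P 0) => [h0 _|hne g]; last by lia.
    exfalso; apply: hno; exists i.+1; split => //=.
    by apply/(eqvD _ _ (Vs i (ltnW (ltnW hi))) (Vs i.+2 hi)).
  have V0 : V (nth e s 0) by apply: Vs; apply: ltnW.
  have claim : forall i, (i.+1 < size s)%N ->
      D (nth e s 0) (nth e s i.+1) = D (nth e s 0) (nth e s i) + D (nth e s i) (nth e s i.+1).
    elim=> [|i IH] hi; first by rewrite Dxx add0r.
    have st := step _ _ _ (hw i (ltnW hi)) (hw i.+1 hi) (nb i hi).
    exact: (extend _ _ _ _ V0 (hw i (ltnW hi)) (hw i.+1 hi) (IH (ltnW hi)) st).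
  have [m hm] : exists m, size s = m.+2 by exists (size s).-2; lia.
  move: heq; rewrite -nth_last hm /= => heq.
  have hm1 : (m.+1 < size s)%N by rewrite hm.
  have [vm vm1 pm _] := hw m hm1.
  have := claim m hm1; have := Dge0 _ _ V0 vm.
  move/(eqvD _ _ V0 vm1): heq; lia.
- move=> g x y vg [vx vy p H]; split; try exact: Vmul; first by rewrite Dinv.
  move=> z vz; rewrite Dinv.
  have <- : mul g (mul (inv g) z) = z by apply: (grp_G2 HG).
  rewrite !Dinv; apply: H; apply: Vmul => //; exact: Vinv.
- move=> g x y vg [vx vy p _] h1 h2.
  have vgx := Vmul _ _ vg vx; have vgy := Vmul _ _ vg vy.
  have vggx := Vmul _ _ vg vgx.
  move/(eqvD _ _ vgx vy): h1 => h1; move/(eqvD _ _ vgy vx): h2 => h2.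
  pose h := mul (inv x) (mul g x).
  have vh : V h by apply: Vmul => //; apply: Vinv.
  have Lh : 0 < l h 0 K.
    have := Dtri x (mul g x) y vx vgx vy; rewrite h1 addr0 => t.
    rewrite /h; change (0 < D x (mul g x)); lia.
  have ehh : mul h h = mul (inv x) (mul g (mul g x)).
    by rewrite /h -A; congr (mul (inv x) _); rewrite -A (grp_G2 HG).
  have Lhh : l (mul h h) 0 K = 0.
    rewrite ehh; change (D x (mul g (mul g x)) = 0).
    have := Dtri x (mul g y) (mul g (mul g x)) vx vgy vggx; rewrite Dinv (Dsym x (mul g y)) h2 (Dsym y (mul g x)) h1.
    have := Dge0 _ _ vx vggx; lia.
  have gp : gpow mul inv e h 2 = mul h h by rewrite /= (grp_mul1 HG).
  have /VP vanh := vh; have /VP vanhh : V (mul h h) by apply: Vmul.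
  have := HB h 2 erefl; rewrite gp.
  have lt : lexlt (l (mul h h)) (l h).
    apply/existsP; exists K; apply/andP; split; first by rewrite Lhh.
    by apply/forallP => i; apply/implyP => hi; rewrite vanh // vanhh.
  move=> /(_ lt) /eqP; rewrite eqn_leq => /andP [/ht_leP hh _].
  have := hh K hk1; rewrite !mxE Lhh subr0 => h0; by rewrite h0 ltxx in Lh.
Qed.
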